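(* In the call-by-value $\lambda$-calculus, contextual equivalence and evaluation-contextual equivalence coincide: for all $M,N\in\Lambda^\bullet$, $M\simeq^v N$ if and only if $M\cong^v N$.
   Context: $\Lambda^\bullet$ is the set of closed $\lambda$-terms; values are closed abstractions $\lambda x.P$. Call-by-value reduction $\longrightarrow$ on closed terms is given by: $MN\longrightarrow MN'$ if $N\longrightarrow N'$; $MV\longrightarrow M'V$ if $M\longrightarrow M'$ and $V$ is a value; $(\lambda x.P)V\longrightarrow P[V/x]$ if $V$ is a value. $\Longrightarrow$ is the reflexive transitive closure; $M{\Downarrow}$ means $M\Longrightarrow V$ for some value $V$. Contexts are generated by $C::=x\mid[\cdot]\mid C\,C\mid\lambda x.C$ and $C[M]$ fills every hole with $M$ (capture allowed). $M\simeq^v N$ iff for all contexts $C$ with $C[M],C[N]$ closed, $C[M]{\Downarrow}\iff C[N]{\Downarrow}$. Call-by-value evaluation contexts are $\mathcal{E}::=[\cdot]\mid M\,\mathcal{E}\mid\mathcal{E}\,V$ with $M\in\Lambda^\bullet$ and $V$ a value; $M\cong^v N$ iff for all evaluation contexts $\mathcal{E}$, $\mathcal{E}[M]{\Downarrow}\iff\mathcal{E}[N]{\Downarrow}$. *)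

(* Defs.v *)
From Stdlib Require Import Arith Relations.

Inductive term : Type :=
| Var : nat -> term
| App : term -> term -> term
| Lam : term -> term.

Fixpoint closed_at (n : nat) (t : term) : Prop :=
  match t with
  | Var i => i < n
  | App t1 t2 => closed_at n t1 /\ closed_at n t2
  | Lam t1 => closed_at (S n) t1
  end.

Definition closed (t : term) : Prop := closed_at 0 t.

Definition is_value (t : term) : Prop := closed t /\ exists P, t = Lam P.

Fixpoint lift (c d : nat) (t : term) : term :=
  match t with
  | Var i => if i <? c then Var i else Var (i + d)
  | App t1 t2 => App (lift c d t1) (lift c d t2)
  | Lam t1 => Lam (lift (S c) d t1)
  end.

Fixpoint subst (k : nat) (v : term) (t : term) : term :=
  match t with
  | Var i =>
      if i <? k then Var i
      else if i =? k then lift 0 k v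
      else Var (i - 1)
  | App t1 t2 => App (subst k v t1) (subst k v t2)
  | Lam t1 => Lam (subst (S k) v t1)
  end.

(* call-by-value reduction on closed terms (right-to-left, as in the paper) *)
Inductive step : term -> term -> Prop :=
| step_appR : forall M N N', closed M -> step N N' -> step (App M N) (App M N')
| step_appL : forall M M' V, is_value V -> step M M' -> step (App M V) (App M' V)
| step_beta : forall P V, closed (Lam P) -> is_value V -> step (App (Lam P) V) (subst 0 V P).

Definition steps : term -> term -> Prop := clos_refl_trans term step.

Definition converges (M : term) : Prop := exists V, steps M V /\ is_value V.

(* general contexts; filling is capturing (no shifting of the plugged term) *)
Inductive ctx : Type :=
| CVar : nat -> ctx
| CHole : ctx
| CApp : ctx -> ctx -> ctx
| CLam : ctx -> ctx.

Fixpoint plug (C : ctx) (M : term) : term :=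
  match C with
  | CVar i => Var i
  | CHole => M
  | CApp C1 C2 => App (plug C1 M) (plug C2 M)
  | CLam C1 => Lam (plug C1 M)
  end.

Definition ctx_equiv (M N : term) : Prop :=
  forall C : ctx, closed (plug C M) -> closed (plug C N) ->
    (converges (plug C M) <-> converges (plug C N)).

Inductive ectx : Type :=
| EHole : ectx
| EAppR : term -> ectx -> ectx
| EAppL : ectx -> term -> ectx.

Fixpoint valid_ectx (E : ectx) : Prop :=
  match E with
  | EHole => True
  | EAppR M E1 => closed M /\ valid_ectx E1
  | EAppL E1 V => is_value V /\ valid_ectx E1
  end.

Fixpoint eplug (E : ectx) (M : term) : term :=
  match E with
  | EHole => M
  | EAppR N E1 => App N (eplug E1 M)
  | EAppL E1 V => App (eplug E1 M) V
  end.

Definition ectx_equiv (M N : term) : Prop :=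
  forall E : ectx, valid_ectx E ->
    (converges (eplug E M) <-> converges (eplug E N)).

(* Main.v *)
Require Import Defs.
From Stdlib Require Import Arith Relations Lia Wf_nat.

Lemma closed_at_mono : forall t n m, closed_at n t -> n <= m -> closed_at m t.
Proof. induction t; simpl; intros k m H Hle.
  - lia.
  - destruct H; split; eauto.
  - eapply IHt; eauto; lia.
Qed.

Fixpoint cclosed_at (n : nat) (C : ctx) : Prop :=
  match C with
  | CVar i => i < n
  | CHole => True
  | CApp a b => cclosed_at n a /\ cclosed_at n b
  | CLam a => cclosed_at (S n) a
  end.

Lemma plug_closed : forall X, closed X -> forall C k, closed_at k (plug C X) <-> cclosed_at k C.
Proof.
  intros X HX; induction C; simpl; intros k; try tauto; try (apply IHC).
  - split; auto. intros _. eapply closed_at_mono; eauto; lia.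
  - rewrite IHC1, IHC2; tauto.
Qed.

Lemma cl : forall X C k, closed X -> cclosed_at k C -> closed_at k (plug C X).
Proof. intros. apply plug_closed; auto. Qed.

Lemma lift_closed : forall t c d, closed_at c t -> lift c d t = t.
Proof.
  induction t; simpl; intros c d H.
  - destruct (n <? c) eqn:E; auto. apply Nat.ltb_ge in E; lia.
  - destruct H; rewrite IHt1, IHt2; auto.
  - rewrite IHt; auto.
Qed.

Lemma subst_closed : forall t k v, closed_at k t -> subst k v t = t.
Proof.
  induction t; simpl; intros k v H.
  - destruct (n <? k) eqn:E; auto. apply Nat.ltb_ge in E; lia.
  - destruct H; rewrite IHt1, IHt2; auto.
  - rewrite IHt; auto.
Qed.

Fixpoint clift (c d : nat) (C : ctx) : ctx :=
  match C with
  | CVar i => if i <? c then CVar i else CVar (i + d)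
  | CHole => CHole
  | CApp a b => CApp (clift c d a) (clift c d b)
  | CLam a => CLam (clift (S c) d a)
  end.

Fixpoint csubst (k : nat) (V : ctx) (C : ctx) : ctx :=
  match C with
  | CVar i => if i <? k then CVar i else if i =? k then clift 0 k V else CVar (i - 1)
  | CHole => CHole
  | CApp a b => CApp (csubst k V a) (csubst k V b)
  | CLam a => CLam (csubst (S k) V a)
  end.

Lemma plug_clift : forall X, closed X -> forall C c d, plug (clift c d C) X = lift c d (plug C X).
Proof.
  intros X HX; induction C; simpl; intros.
  - destruct (n <? c); auto.
  - rewrite lift_closed; auto. eapply closed_at_mono; eauto; lia.
  - rewrite IHC1, IHC2; auto.
  - rewrite IHC; auto.
Qed.

Lemma plug_csubst : forall X, closed X -> forall C k V, plug (csubst k V C) X = subst k (plug V X) (plug C X).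
Proof.
  intros X HX; induction C; simpl; intros.
  - destruct (n <? k); auto. destruct (n =? k); auto. apply plug_clift; auto.
  - rewrite subst_closed; auto. eapply closed_at_mono; eauto; lia.
  - rewrite IHC1, IHC2; auto.
  - rewrite IHC; auto.
Qed.

Fixpoint tc (t : term) : ctx :=
  match t with
  | Var i => CVar i
  | App a b => CApp (tc a) (tc b)
  | Lam a => CLam (tc a)
  end.

Lemma plug_tc : forall t X, plug (tc t) X = t.
Proof. induction t; simpl; intros; congruence. Qed.

Fixpoint hc (C : ctx) : nat :=
  match C with
  | CVar _ => 0
  | CHole => 1
  | CApp a b => hc a + hc b
  | CLam a => hc a
  end.

Lemma hc_tc : forall t, hc (tc t) = 0.
Proof. induction t; simpl; lia. Qed.

Inductive cectx : Type :=
| CEHole : cectx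
| CEAppR : ctx -> cectx -> cectx
| CEAppL : cectx -> ctx -> cectx.

Fixpoint cefill (E : cectx) (D : ctx) : ctx :=
  match E with
  | CEHole => D
  | CEAppR C E1 => CApp C (cefill E1 D)
  | CEAppL E1 V => CApp (cefill E1 D) V
  end.

Fixpoint cinst (E : cectx) (X : term) : ectx :=
  match E with
  | CEHole => EHole
  | CEAppR C E1 => EAppR (plug C X) (cinst E1 X)
  | CEAppL E1 V => EAppL (cinst E1 X) (plug V X)
  end.

Fixpoint hce (E : cectx) : nat :=
  match E with
  | CEHole => 0
  | CEAppR C E1 => hc C + hce E1
  | CEAppL E1 V => hce E1 + hc V
  end.

Lemma hc_cefill : forall E D, hc (cefill E D) = hce E + hc D.
Proof. induction E; simpl; intros; try rewrite IHE; lia. Qed.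

Lemma plug_cefill : forall E D X, plug (cefill E D) X = eplug (cinst E X) (plug D X).
Proof. induction E; simpl; intros; try rewrite IHE; auto. Qed.

Lemma decomp : forall C, cclosed_at 0 C ->
  (exists A, C = CLam A) \/
  (exists C', forall X, closed X -> step (plug C X) (plug C' X)) \/
  (exists E, C = cefill E CHole /\ forall X, closed X -> valid_ectx (cinst E X)).
Proof.
  induction C; simpl; intros Hc.
  - lia.
  - right; right. exists CEHole; split; simpl; auto.
  - destruct Hc as [H1 H2].
    destruct (IHC2 H2) as [[A ->]|[[C' HC']|[E [-> HE]]]].
    + destruct (IHC1 H1) as [[B ->]|[[C' HC']|[E [-> HE]]]].
      * right; left. exists (csubst 0 (CLam A) B). intros X HX. simpl.
        rewrite plug_csubst by auto. simpl. apply step_beta.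
        -- apply (cl X (CLam B) 0); auto.
        -- split; [apply (cl X (CLam A) 0); auto | eauto].
      * right; left. exists (CApp C' (CLam A)). intros X HX; simpl.
        apply step_appL; [split; [apply (cl X (CLam A) 0); auto | eauto] | apply HC'; auto].
      * right; right. exists (CEAppL E (CLam A)). split; [reflexivity|].
        intros X HX; simpl; split; [split; [apply (cl X (CLam A) 0); auto | eauto] | auto].
    + right; left. exists (CApp C1 C'). intros X HX; simpl.
      apply step_appR; [apply cl; auto | auto].
    + right; right. exists (CEAppR C1 E); split; [reflexivity|].
      intros X HX; simpl; split; [apply cl; auto | auto].
  - left; eauto.
Qed.

Inductive nsteps : nat -> term -> term -> Prop :=
| ns0 : forall t, nsteps 0 t t
| nsS : forall n a b c, step a b -> nsteps n b c -> nsteps (S n) a c.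

Lemma steps_nsteps : forall a b, steps a b -> exists n, nsteps n a b.
Proof.
  intros a b H. apply clos_rt_rt1n in H. induction H.
  - exists 0; constructor.
  - destruct IHclos_refl_trans_1n as [n Hn]. exists (S n); econstructor; eauto.
Qed.

Lemma lam_nostep : forall P t, ~ step (Lam P) t.
Proof. intros P t H; inversion H. Qed.

Lemma value_nostep : forall V t, is_value V -> ~ step V t.
Proof. intros V t [_ [P ->]]. apply lam_nostep. Qed.

Lemma step_det : forall a b, step a b -> forall c, step a c -> b = c.
Proof.
  intros a b H; induction H; intros c H2; inversion H2; subst.
  - f_equal; auto.
  - exfalso; eapply value_nostep; eauto.
  - exfalso; eapply value_nostep; eauto.
  - exfalso; eapply value_nostep; eauto.
  - f_equal; auto.
  - exfalso; eapply lam_nostep; eauto.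
  - exfalso; eapply value_nostep; eauto.
  - exfalso; eapply lam_nostep; eauto.
  - reflexivity.
Qed.

Lemma subst_closed_at : forall P m k V, closed_at (S m) P -> closed V -> k <= m ->
  closed_at m (subst k V P).
Proof.
  induction P; simpl; intros m k V HP HV Hk.
  - destruct (n <? k) eqn:E1; simpl. apply Nat.ltb_lt in E1; lia.
    destruct (n =? k) eqn:E2. rewrite lift_closed by auto.
    eapply closed_at_mono; eauto; lia.
    simpl. apply Nat.ltb_ge in E1. apply Nat.eqb_neq in E2. lia.
  - destruct HP; split; eauto.
  - apply IHP; auto; lia.
Qed.

Lemma step_closed : forall a b, step a b -> closed a -> closed b.
Proof.
  intros a b H; induction H; unfold closed in *; simpl; intros Hc.
  - destruct Hc; split; auto.
  - destruct Hc; split; auto.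
  - destruct Hc as [HP HV]. apply subst_closed_at; auto.
Qed.

Section Main.
Variables M N : term.
Hypothesis HM : closed M.
Hypothesis HN : closed N.
Hypothesis Hciu : forall E, valid_ectx E -> converges (eplug E M) -> converges (eplug E N).

Lemma main_aux : forall n h C V, hc C = h -> cclosed_at 0 C -> nsteps n (plug C M) V -> is_value V ->
  converges (plug C N).
Proof.
  intro n; induction n as [n IHn] using lt_wf_ind.
  intro h; induction h as [h IHh] using lt_wf_ind.
  intros C V Hh Hc Hs Hv.
  destruct (decomp C Hc) as [[A ->]|[[C' HC']|[E [-> HE]]]].
  - exists (Lam (plug A N)); split; [apply rt_refl|].
    split; [apply (cl N (CLam A) 0); auto | eauto].
  - inversion Hs; subst.
    + exfalso; eapply value_nostep; eauto.
    + assert (b = plug C' M) by (eapply step_det; eauto). subst b.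
      assert (Hc' : cclosed_at 0 C').
      { apply (plug_closed M HM). apply (step_closed _ _ (HC' M HM)). apply cl; auto. }
      destruct (IHn n0 (Nat.lt_succ_diag_r _) (hc C') C' V eq_refl Hc' H0 Hv) as [W [HW1 HW2]].
      exists W; split; auto. eapply rt_trans; [apply rt_step; apply HC'; auto | auto].
  - set (C1 := cefill E (tc M)).
    assert (Heq : plug C1 M = plug (cefill E CHole) M).
    { unfold C1; rewrite !plug_cefill, plug_tc; reflexivity. }
    assert (Hlt : hc C1 < h).
    { subst h; unfold C1; rewrite !hc_cefill, hc_tc; simpl; lia. }
    assert (Hc1 : cclosed_at 0 C1).
    { apply (plug_closed M HM). rewrite Heq. apply cl; auto. }
    rewrite <- Heq in Hs.
    specialize (IHh (hc C1) Hlt C1 V eq_refl Hc1 Hs Hv).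
    unfold C1 in IHh. rewrite plug_cefill, plug_tc in IHh.
    rewrite plug_cefill. simpl. apply Hciu; auto.
Qed.

Lemma main : forall C, closed (plug C M) -> converges (plug C M) -> converges (plug C N).
Proof.
  intros C Hc [V [HV Hv]]. destruct (steps_nsteps _ _ HV) as [n Hn].
  eapply main_aux; eauto. apply (plug_closed M HM); auto.
Qed.
End Main.

Fixpoint ectx_to_ctx (E : ectx) : ctx :=
  match E with
  | EHole => CHole
  | EAppR P E1 => CApp (tc P) (ectx_to_ctx E1)
  | EAppL E1 V => CApp (ectx_to_ctx E1) (tc V)
  end.

Lemma plug_ectx : forall E X, plug (ectx_to_ctx E) X = eplug E X.
Proof. induction E; simpl; intros; rewrite ?plug_tc, ?IHE; auto. Qed.

Lemma eplug_closed : forall E X, valid_ectx E -> closed X -> closed (eplug E X).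
Proof.
  induction E; simpl; intros X HE HX; unfold closed in *; simpl; auto.
  - destruct HE; split; auto.
  - destruct HE as [[HV _] HE]; split; auto.
Qed.

Theorem mainTheorem12 (M N : term) (HM : closed M) (HN : closed N) :
  ctx_equiv M N <-> ectx_equiv M N.
Proof.
  split.
  - intros H E HE. specialize (H (ectx_to_ctx E)). rewrite !plug_ectx in H.
    apply H; apply eplug_closed; auto.
  - intros H C HCM HCN. split.
    + apply main; auto. intros E HE; apply H; auto.
    + apply main; auto. intros E HE; apply H; auto.
Qed.
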